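(* Let $n\ge 1$ and let $\mathcal{C}_2\subseteq\mathbb{F}_2^n$ be a binary linear code. Let $\tilde{\mathcal{C}}_3=\{x\in\mathbb{F}_2^n:\sum_{i=1}^n x_i\equiv 0 \pmod 2\}$ and $\overline{\mathcal{C}}_3=\{y\in\mathbb{F}_2^n:\sum_{i=1}^n y_i\equiv 1 \pmod 2\}$, and define the code $\mathcal{C}\subseteq\mathbb{F}_2^{3n}$ by $$\mathcal{C}=\{(0,\dots,0,\,a,\,x): a\in\mathcal{C}_2,\ x\in\tilde{\mathcal{C}}_3\}\ \cup\ \{(1,\dots,1,\,a,\,y): a\in\mathcal{C}_2,\ y\in\overline{\mathcal{C}}_3\},$$ where each codeword is written as $(c_1,c_2,c_3)$ with $c_1,c_2,c_3\in\mathbb{F}_2^n$ (so the first block $c_1$ lies in the repetition code $\{(0,\dots,0),(1,\dots,1)\}$). Define $$\Gamma_{C^\star}=\{c_1+2c_2+4c_3+8z:\ (c_1,c_2,c_3)\in\mathcal{C},\ z\in\mathbb{Z}^n\}\subseteq\mathbb{R}^n,$$ where vectors of $\mathbb{F}_2^n$ are identified with vectors in $\{0,1\}^n\subseteq\mathbb{R}^n$ and the operations are real addition and scalar multiplication. Then $\Gamma_{C^\star}$ is a lattice if and only if $\mathcal{C}_2$ is self-orthogonal and contains the all-ones vector $(1,\dots,1)$.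
   Context: A lattice in $\mathbb{R}^n$ is the set of all integer linear combinations of a set of linearly independent vectors of $\mathbb{R}^n$. For $c,\tilde c\in\mathbb{F}_2^n$, $\langle c,\tilde c\rangle=\sum_{i=1}^n c_i\tilde c_i \bmod 2$, and $\mathcal{C}^\perp=\{c\in\mathbb{F}_2^n:\langle c,\tilde c\rangle=0 \text{ for all }\tilde c\in\mathcal{C}\}$. A binary code $\mathcal{C}$ is self-orthogonal if $\mathcal{C}\subseteq\mathcal{C}^\perp$. (Here $\mathcal{C}_2$ being linear is equivalent to the code $\mathcal{C}$ above being linear.) *)

(* Defs.v *)
From HB Require Import structures.
From mathcomp Require Import all_boot all_order all_algebra.
From mathcomp Require Import reals.
Unset Printing Implicit Defensive.
Import Order.TTheory GRing.Theory Num.Theory.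
Local Open Scope ring_scope.

Definition f2dot {n : nat} (c c' : 'rV['F_2]_n) : 'F_2 :=
  \sum_(i < n) c 0 i * c' 0 i.

Definition dual_code {n : nat} (C : {set 'rV['F_2]_n}) : {set 'rV['F_2]_n} :=
  [set c | [forall c' in C, f2dot c c' == 0]].

Definition self_orthogonal {n : nat} (C : {set 'rV['F_2]_n}) : Prop :=
  C \subset dual_code C.

(* A binary linear code: an F_2-subspace (over F_2: contains 0, closed under +). *)
Definition linear_code {n : nat} (C : {set 'rV['F_2]_n}) : Prop :=
  (0 : 'rV['F_2]_n) \in C /\ (forall a b, a \in C -> b \in C -> a + b \in C).

Definition ones (n : nat) : 'rV['F_2]_n := const_mx 1.

Definition parity {n : nat} (x : 'rV['F_2]_n) : 'F_2 := \sum_(i < n) x 0 i.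

Definition C3tilde (n : nat) : {set 'rV['F_2]_n} := [set x | parity x == 0].
Definition C3bar (n : nat) : {set 'rV['F_2]_n} := [set y | parity y == 1].

Definition Ccode {n : nat} (C2 : {set 'rV['F_2]_n})
  (c1 c2 c3 : 'rV['F_2]_n) : Prop :=
  (c1 = 0 /\ c2 \in C2 /\ c3 \in C3tilde n) \/
  (c1 = ones n /\ c2 \in C2 /\ c3 \in C3bar n).

Definition f2R (R : realType) (b : 'F_2) : R := (nat_of_ord b)%:R.
Definition vecR (R : realType) {n : nat} (c : 'rV['F_2]_n) : 'rV[R]_n :=
  map_mx (f2R R) c.

Definition GammaCstar (R : realType) {n : nat} (C2 : {set 'rV['F_2]_n})
  (v : 'rV[R]_n) : Prop :=
  exists (c1 c2 c3 : 'rV['F_2]_n) (z : 'rV[int]_n),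
    Ccode C2 c1 c2 c3 /\
    v = vecR R c1 + 2 *: vecR R c2 + 4 *: vecR R c3 + 8 *: map_mx intr z.

Definition is_lattice {R : realType} {n : nat} (S : 'rV[R]_n -> Prop) : Prop :=
  exists (k : nat) (B : 'M[R]_(k, n)),
    row_free B /\
    (forall v, S v <-> exists z : 'rV[int]_k, v = map_mx intr z *m B).

(* Main.v *)
Require Import Defs.
From HB Require Import structures.
From mathcomp Require Import all_boot all_order all_algebra.
From mathcomp Require Import reals.
From mathcomp Require Import zify.
Import Order.TTheory GRing.Theory Num.Theory.
Local Open Scope ring_scope.

Definition toZ (b : 'F_2) : int := (nat_of_ord b)%:Z.
Definition maj (x y w : 'F_2) := x * y + y * w + x * w.
Lemma F2cases (x : 'F_2) : x = 0 \/ x = 1.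
Proof. case: x => [[|[|//]]] H; [left|right]; exact: val_inj. Qed.
Lemma toZ0 : toZ 0 = 0. Proof. by []. Qed.
Lemma toZ1 : toZ 1 = 1. Proof. by []. Qed.
Lemma toZ_bnd x : 0 <= toZ x <= 1.
Proof. by case: (F2cases x) => ->; rewrite ?mul0r ?mul1r. Qed.
Lemma toZ_inj : injective toZ.
Proof. by move=> x y [] /val_inj. Qed.

Lemma addid : forall s s' b b' c c' : 'F_2,
 toZ s + toZ s' + 2 * (toZ b + toZ b') + 4 * (toZ c + toZ c') =
 toZ (s + s') + 2 * toZ (b + b' + s * s') + 4 * toZ (c + c' + maj b b' (s * s'))
  + 8 * toZ (maj c c' (maj b b' (s * s'))).
Proof.
move=> s s' b b' c c'.
case: (F2cases s) => ->; case: (F2cases s') => ->;case: (F2cases b) => ->;case: (F2cases b') => ->;case: (F2cases c) => ->;case: (F2cases c') => ->; by [].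
Qed.

Lemma addid2 (a b : 'F_2) :
  2 * (toZ a + toZ b) = toZ 0 + 2 * toZ (a + b) + 4 * toZ (a * b) + 8 * 0.
Proof. by case: (F2cases a) => ->; case: (F2cases b) => ->. Qed.

Lemma uniq3 a b c (z : int) a' b' c' (z' : int) :
  toZ a + 2 * toZ b + 4 * toZ c + 8 * z = toZ a' + 2 * toZ b' + 4 * toZ c' + 8 * z' ->
  [/\ a = a', b = b' & c = c'].
Proof.
move=> H.
have := toZ_bnd a; have := toZ_bnd b; have := toZ_bnd c.
have := toZ_bnd a'; have := toZ_bnd b'; have := toZ_bnd c'.
move=> /andP[? ?] /andP[? ?] /andP[? ?] /andP[? ?] /andP[? ?] /andP[? ?].
have ha : toZ a = toZ a' by lia.
have hb : toZ b = toZ b' by lia.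
have hc : toZ c = toZ c' by lia.
by split; apply: toZ_inj.
Qed.

Lemma sqF2 (x : 'F_2) : x * x = x.
Proof. by case: (F2cases x) => ->; rewrite ?mul0r ?mul1r. Qed.
Lemma F2_11 : (1 + 1 : 'F_2) = 0. Proof. exact: val_inj. Qed.

Definition vZ {n} (c : 'rV['F_2]_n) : 'rV[int]_n := map_mx toZ c.

Definition GI {n} (C2 : {set 'rV['F_2]_n}) (v : 'rV[int]_n) : Prop :=
  exists (s : 'F_2) c2 c3 (z : 'rV[int]_n), c2 \in C2 /\ parity c3 = s /\
    v = vZ (const_mx s) + 2 *: vZ c2 + 4 *: vZ c3 + 8 *: z.

Lemma vecRE (R : realType) n (c1 c2 c3 : 'rV['F_2]_n) (z : 'rV[int]_n) :
  vecR R c1 + 2 *: vecR R c2 + 4 *: vecR R c3 + 8 *: map_mx intr z =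
  map_mx intr (vZ c1 + 2 *: vZ c2 + 4 *: vZ c3 + 8 *: z).
Proof.
apply/matrixP => i j; rewrite !mxE /f2R /toZ.
by rewrite !rmorphD !rmorphM /= !rmorph_nat.
Qed.

Lemma CcodeE n (C2 : {set 'rV['F_2]_n}) c1 c2 c3 :
  Ccode C2 c1 c2 c3 <-> exists s, c1 = const_mx s /\ c2 \in C2 /\ parity c3 = s.
Proof.
split.
  case=> [[-> [H2 H3]] | [-> [H2 H3]]].
    exists 0; split; first by apply/matrixP => i j; rewrite !mxE.
    by move: H3; rewrite inE => /eqP.
  by exists 1; move: H3; rewrite inE => /eqP.
case=> s [-> [H2]]; case: (F2cases s) => -> H3.
  left; split; first by apply/matrixP => i j; rewrite !mxE.
  by rewrite inE H3.
by right; rewrite inE H3.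
Qed.

Lemma GammaE (R : realType) n (C2 : {set 'rV['F_2]_n}) v :
  GammaCstar R C2 v <-> exists u, v = map_mx intr u /\ GI C2 u.
Proof.
split.
  case=> c1 [c2 [c3 [z [/CcodeE [s [-> [H2 H3]]] ->]]]].
  eexists; split; first exact: vecRE.
  by exists s, c2, c3, z.
case=> u [-> [s [c2 [c3 [z [H2 [H3 ->]]]]]]].
exists (const_mx s), c2, c3, z; split; last by rewrite vecRE.
by apply/CcodeE; exists s.
Qed.

Lemma lin_add (A A' B B' C C' D E F G z z' : int) :
 A + A' + 2 * (B + B') + 4 * (C + C') = D + 2 * E + 4 * F + 8 * G ->
 A + 2 * B + 4 * C + 8 * z + (A' + 2 * B' + 4 * C' + 8 * z') = D + 2 * E + 4 * F + 8 * (z + z' + G).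
Proof. lia. Qed.

Lemma lin_opp (x : int) : - x = x *+ 7 + 8 * (- x).
Proof. lia. Qed.

Lemma parityD n (x y : 'rV['F_2]_n) : parity (x + y) = parity x + parity y.
Proof. by rewrite /parity -big_split; apply: eq_bigr => i _; rewrite mxE. Qed.

Lemma parity_self n (x : 'rV['F_2]_n) : parity x = f2dot x x.
Proof. by apply: eq_bigr => i _; rewrite sqF2. Qed.

Lemma parity_maj n (b b' : 'rV['F_2]_n) t :
  f2dot b b' = 0 -> f2dot b b = 0 -> f2dot b' b' = 0 ->
  parity (\row_j maj (b 0 j) (b' 0 j) t) = 0.
Proof.
move=> h1 h2 h3.
rewrite /parity (eq_bigr (fun j => b 0 j * b' 0 j + b' 0 j * t + b 0 j * t));
  last by move=> j _; rewrite mxE.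
rewrite !big_split /= -!mulr_suml.
have -> : \sum_(i < n) b 0 i * b' 0 i = f2dot b b' by [].
by rewrite -/(parity b) -/(parity b') !parity_self h1 h2 h3 !mul0r !addr0.
Qed.

Section Closure.
Variables (n : nat) (C2 : {set 'rV['F_2]_n}).
Hypothesis hlin : linear_code C2.
Hypothesis hone : ones n \in C2.
Hypothesis hso : forall a b, a \in C2 -> b \in C2 -> f2dot a b = 0.

Lemma constC2 t : const_mx t \in C2.
Proof.
case: (F2cases t) => -> //.
have -> : const_mx 0 = (0 : 'rV['F_2]_n) by apply/matrixP => i j; rewrite !mxE.
by case: hlin.
Qed.

Lemma GI0 : GI C2 0.
Proof.
exists 0, 0, 0, 0; split; first by case: hlin.
split; first by rewrite /parity big1 // => i _; rewrite mxE.
by apply/matrixP => i j; rewrite !mxE.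
Qed.

Lemma GI_add u u' : GI C2 u -> GI C2 u' -> GI C2 (u + u').
Proof.
case=> s [b [c [z [Hb [Hc ->]]]]].
case=> s' [b' [c' [z' [Hb' [Hc' ->]]]]].
pose M := \row_j maj (b 0 j) (b' 0 j) (s * s').
exists (s + s'), (b + b' + const_mx (s * s')), (c + c' + M),
  (z + z' + \row_j toZ (maj (c 0 j) (c' 0 j) (maj (b 0 j) (b' 0 j) (s * s')))).
split.
  by case: hlin => _ hadd; apply hadd; [apply hadd|apply: constC2].
split.
  by rewrite !parityD parity_maj ?addr0 ?Hc ?Hc' //; apply: hso.
apply/matrixP => i j; rewrite !mxE (ord1 i).
exact: lin_add (addid s s' (b 0 j) (b' 0 j) (c 0 j) (c' 0 j)).
Qed.

Lemma GI_add8 u w : GI C2 u -> GI C2 (u + 8 *: w).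
Proof.
case=> s [b [c [z [Hb [Hc ->]]]]].
by exists s, b, c, (z + w); split => //; split => //; rewrite scalerDr addrA.
Qed.

Lemma GI_muln u k : GI C2 u -> GI C2 (u *+ k).
Proof.
move=> Hu; elim: k => [|k IH]; first by rewrite mulr0n; exact: GI0.
by rewrite mulrS; apply: GI_add.
Qed.

Lemma GI_opp u : GI C2 u -> GI C2 (- u).
Proof.
move=> Hu.
have -> : - u = u *+ 7 + 8 *: (- u).
  by apply/matrixP => i j; rewrite !mxE ?mulmxnE; exact: lin_opp.
by apply: GI_add8; apply: GI_muln.
Qed.

Lemma GI_scale (k : int) u : GI C2 u -> GI C2 (k *: u).
Proof.
move=> Hu; case: k => m.
  by rewrite -natz scaler_nat; apply: GI_muln.
by rewrite NegzE scaleNr -natz scaler_nat; apply: GI_opp; apply: GI_muln.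
Qed.

Lemma GI_sum (I : Type) (r : seq I) (P : pred I) (F : I -> 'rV[int]_n) :
  (forall i, GI C2 (F i)) -> GI C2 (\sum_(i <- r | P i) F i).
Proof.
move=> HF; elim/big_ind: _ => //; first exact: GI0.
exact: GI_add.
Qed.

Definition X := ('F_2 * 'rV['F_2]_n * 'rV['F_2]_n)%type.
Definition gen (t : X) : 'rV[int]_n :=
  if (t.1.2 \in C2) && (parity t.2 == t.1.1)
  then vZ (const_mx t.1.1) + 2 *: vZ t.1.2 + 4 *: vZ t.2 else 0.
Definition Gc : 'M[int]_(#|{: X}|, n) := \matrix_(i < #|{: X}|) gen (enum_val i).
Definition G : 'M[int]_(n + #|{: X}|, n) := col_mx (8%:M) Gc.

Lemma GI_span u : GI C2 u <-> exists y : 'rV_(n + #|{: X}|), u = y *m G.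
Proof.
split.
  case=> s [b [c [z [Hb [Hc ->]]]]].
  exists (row_mx z (delta_mx 0 (enum_rank ((s, b, c) : X)))).
  rewrite mul_row_col mul_mx_scalar -rowE rowK enum_rankK /gen /= Hb Hc eqxx /=.
  by rewrite [RHS]addrC.
case=> y ->.
rewrite -[y]hsubmxK mul_row_col mul_mx_scalar.
apply: GI_add.
  by rewrite -[8 *: _]add0r; apply: GI_add8; apply: GI0.
rewrite mulmx_sum_row; apply: GI_sum => i; apply: GI_scale.
rewrite rowK /gen; case: ifP => [/andP[h1 /eqP h2]|_]; last exact: GI0.
exists (enum_val i).1.1, (enum_val i).1.2, (enum_val i).2, 0.
by split => //; split => //; rewrite scaler0 addr0.
Qed.


Lemma lattice_basis : exists Bint : 'M[int]_n, (\det Bint != 0) /\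
  (forall u, GI C2 u <-> exists y : 'rV_n, u = y *m Bint).
Proof.
have [L uL [Rm uR [d _ EG]]] := int_Smith_normal_form G.
set D := \matrix_(i, j) _ in EG.
pose D' : 'M[int]_n := \matrix_(i, j) (d`_i *+ (i == j :> nat)).
have ED : D = col_mx D' 0.
  apply/matrixP => i j; rewrite !mxE; case: splitP => k Hk; rewrite !mxE Hk //.
  by rewrite gtn_eqF ?mulr0n // ltn_addr.
have XD : forall k (Y : 'M_(k, n + #|{:X}|)), Y *m D = lsubmx Y *m D'.
  by move=> k Y; rewrite ED -{1}[Y]hsubmxK mul_row_col mulmx0 addr0.
exists (D' *m Rm); split.
  have H : row_mx (1%:M : 'M[int]_n) (0 : 'M_(n, #|{:X}|)) *m G = 8%:M.
    by rewrite /G mul_row_col mul1mx mul0mx addr0.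
  rewrite EG !mulmxA XD -mulmxA in H.
  apply/negP => /eqP h0.
  move: (congr1 determinant H); rewrite det_mulmx h0 mulr0 det_scalar => /esym/eqP.
  by rewrite expf_eq0 pnatr_eq0 andbF.
move=> u; rewrite GI_span; split.
  case=> y ->; exists (lsubmx (y *m L)).
  by rewrite EG !mulmxA XD.
case=> y ->; exists (row_mx y 0 *m invmx L).
by rewrite EG !mulmxA -(mulmxA _ (invmx L)) mulVmx // mulmx1 XD row_mxKl.
Qed.

End Closure.

Lemma mapZ_inj (R : realType) m k (A B : 'M[int]_(m, k)) :
  map_mx (intr : int -> R) A = map_mx intr B -> A = B.
Proof.
move/matrixP => H; apply/matrixP => i j; move: (H i j); rewrite !mxE.
exact: intr_inj.
Qed.

Lemma lin_ones (t : int) :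
  toZ 1 + 2 * toZ 0 + 4 * t + 8 * 0 + (toZ 1 + 2 * toZ 0 + 4 * t + 8 * 0) =
  toZ 0 + 2 * toZ 1 + 4 * toZ 0 + 8 * t.
Proof. rewrite toZ0 toZ1; lia. Qed.

Lemma lin_so (A B : int) :
  toZ 0 + 2 * A + 4 * toZ 0 + 8 * 0 + (toZ 0 + 2 * B + 4 * toZ 0 + 8 * 0) =
  2 * (A + B).
Proof. rewrite toZ0; lia. Qed.

Lemma parity0 n : parity (0 : 'rV['F_2]_n) = 0.
Proof. by rewrite /parity big1 // => i _; rewrite mxE. Qed.

Theorem theorem2 (R : realType) (n : nat) (hn : (1 <= n)%N)
  (C2 : {set 'rV['F_2]_n}) (hC2 : linear_code C2) :
  is_lattice (GammaCstar R C2) <-> (self_orthogonal C2 /\ ones n \in C2).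
Proof.
have C20 : (0 : 'rV['F_2]_n) \in C2 by case: hC2.
split.
  case=> k [B [_ HB]].
  have Hadd : forall u u', GI C2 u -> GI C2 u' -> GI C2 (u + u').
    move=> u u' Hu Hu'.
    have /HB [y Hy] : GammaCstar R C2 (map_mx intr u) by apply/GammaE; exists u.
    have /HB [y' Hy'] : GammaCstar R C2 (map_mx intr u') by apply/GammaE; exists u'.
    have : GammaCstar R C2 (map_mx intr (u + u')).
      by apply/HB; exists (y + y'); rewrite !map_mxD mulmxDl -Hy -Hy'.
    by case/GammaE => w [/mapZ_inj -> Hg].
  pose j0 : 'I_n := Ordinal hn.
  split; last first.
    have [e He] : exists e : 'rV['F_2]_n, parity e = 1.
      exists (delta_mx 0 j0); rewrite /parity (bigD1 j0) //= big1 ?addr0.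
        by rewrite mxE !eqxx.
      by move=> i /negbTE hi; rewrite mxE hi andbF.
    pose u1 := vZ (const_mx 1) + 2 *: vZ 0 + 4 *: vZ e + 8 *: (0 : 'rV[int]_n).
    have Hu1 : GI C2 u1 by exists 1, 0, e, 0.
    case: (Hadd _ _ Hu1 Hu1) => s' [b' [c' [z' [Hb' [Hc' E]]]]].
    suff -> : ones n = b' by [].
    apply/matrixP => i j; rewrite (ord1 i) mxE.
    move/matrixP: E => /(_ 0 j); rewrite !mxE.
    move=> H.
    by case: (@uniq3 _ _ _ _ _ _ _ _ (etrans (esym (lin_ones _)) H)).
  apply/subsetP => a Ha; rewrite inE; apply/forall_inP => b Hb; apply/eqP.
  pose ua := vZ (const_mx 0) + 2 *: vZ a + 4 *: vZ 0 + 8 *: (0 : 'rV[int]_n).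
  pose ub := vZ (const_mx 0) + 2 *: vZ b + 4 *: vZ 0 + 8 *: (0 : 'rV[int]_n).
  have Hua : GI C2 ua by exists 0, a, 0, 0; rewrite parity0.
  have Hub : GI C2 ub by exists 0, b, 0, 0; rewrite parity0.
  case: (Hadd _ _ Hua Hub) => s' [b' [c' [z' [Hb' [Hc' E]]]]].
  have Hj : forall j, 0 = s' /\ a 0 j * b 0 j = c' 0 j.
    move=> j; move/matrixP: E => /(_ 0 j); rewrite !mxE => H.
    have H2 := etrans (esym (addid2 (a 0 j) (b 0 j))) (etrans (esym (lin_so _ _)) H).
    by case: (@uniq3 _ _ _ _ _ _ _ _ H2).
  have <- : s' = 0 by case: (Hj j0).
  rewrite -Hc' /parity /f2dot; apply: eq_bigr => j _.
  by case: (Hj j).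
case=> hso hone.
have hso' : forall a b, a \in C2 -> b \in C2 -> f2dot a b = 0.
  move=> a b Ha Hb; move/subsetP: hso => /(_ a Ha); rewrite inE.
  by move/forall_inP => /(_ b Hb) /eqP.
have [Bint [hdet HB]] := @lattice_basis n C2 hC2 hone hso'.
exists n, (map_mx intr Bint); split.
  by rewrite row_free_unit unitmxE det_map_mx unitfE intr_eq0.
move=> v; rewrite GammaE; split.
  by case=> u [-> /HB [y ->]]; exists y; rewrite map_mxM.
case=> y ->; exists (y *m Bint); split; first by rewrite map_mxM.
by apply/HB; exists y.
Qed.
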